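(* Both sets $$\{\alpha(W')\alpha(W'')(\mathbf I)\mid W'\in\mathcal W^0(\mathfrak X^{(1)}_{1\otimes2}),\ W''\in\mathcal W^0(\mathfrak X^{(2)}_{1\otimes2})\}$$ and $$\{\alpha(W')\alpha(W'')(\mathbf I)\mid W'\in\mathcal W^0(\mathfrak X^{(2)}_{2\otimes1}),\ W''\in\mathcal W^0(\mathfrak X^{(1)}_{2\otimes1})\}$$ are linearly independent subsets of $\mathcal U(\mathfrak X)$ (distinct pairs $(W',W'')$ giving linearly independent elements).
   Context: $\mathfrak X$ is the complex Lie algebra generated by $Z_1,Z_{11},Z_2,Z_{22},Z_{12}$ subject only to $[Z_1,Z_2]=[Z_{11},Z_2]=[Z_1,Z_{22}]=0$ and $[Z_{11},Z_{22}]=-[Z_{11},Z_{12}]=[Z_{22},Z_{12}]=-[Z_1-Z_2,Z_{12}]$; $\mathcal U(\mathfrak X)$ is its universal enveloping algebra with unit $\mathbf I$. $\mathfrak X^{(1)}_{1\otimes2},\mathfrak X^{(2)}_{1\otimes2},\mathfrak X^{(2)}_{2\otimes1},\mathfrak X^{(1)}_{2\otimes1}$ are the Lie subalgebras generated by $\{Z_1,Z_{11},Z_{12}\},\{Z_2,Z_{22}\},\{Z_2,Z_{22},Z_{12}\},\{Z_1,Z_{11}\}$; $\mathcal W^0(\mathfrak A)$ is the set of words (noncommutative monomials, including the empty word) in the generators of $\mathfrak A$ not ending with $Z_1$ or $Z_2$. For a word $W$, $\alpha(W)\in\mathrm{End}(\mathcal U(\mathfrak X))$ is the composition, in the order of the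 letters, of the operators $Z_1\mapsto\mathrm{ad}(Z_1)$, $Z_2\mapsto\mathrm{ad}(Z_2)$, $Z_{11}\mapsto\mu(Z_{11})$, $Z_{22}\mapsto\mu(Z_{22})$, $Z_{12}\mapsto\mu(Z_{12})$, where $\mathrm{ad}(X)F=[X,F]$ and $\mu(X)F=XF$. *)

(* Defs.v *)
From HB Require Import structures.
From mathcomp Require Import all_boot all_algebra.
From mathcomp Require Import complex Rstruct.
Set Implicit Arguments. Unset Strict Implicit. Unset Printing Implicit Defensive.
Import GRing.Theory.
Local Open Scope ring_scope.

Definition C : fieldType := (Rdefinitions.R)[i].

Inductive gen := Z1 | Z11 | Z2 | Z22 | Z12.

Definition gen_eqb (a b : gen) : bool :=
  match a, b with
  | Z1, Z1 | Z11, Z11 | Z2, Z2 | Z22, Z22 | Z12, Z12 => true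
  | _, _ => false
  end.
Lemma gen_eqP : Equality.axiom gen_eqb.
Proof. by case; case; constructor. Qed.
HB.instance Definition _ := hasDecEq.Build gen gen_eqP.

Definition word := seq gen.

(* The free associative C-algebra on the generators, realised as functions
   word -> C (coefficient of each monomial); product = concatenation
   convolution.  Every element we construct is finitely supported. *)
Definition FA := word -> C.

Definition fa_add (f g : FA) : FA := fun w => f w + g w.
Definition fa_sub (f g : FA) : FA := fun w => f w - g w.
Definition fa_mul (f g : FA) : FA :=
  fun w => \sum_(i < (size w).+1) f (take i w) * g (drop i w).
Definition fa_mono (u : word) : FA := fun w => if w == u then 1 else 0.
Definition fa_one : FA := fa_mono [::].
Definition fa_gen (g : gen) : FA := fa_mono [:: g].
Definition fa_comm (f g : FA) : FA := fa_sub (fa_mul f g) (fa_mul g f).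

(* Defining relations of X, written as elements of the free associative
   algebra (Lie bracket [a,b] = ab - ba):
   [Z1,Z2] = [Z11,Z2] = [Z1,Z22] = 0,
   [Z11,Z22] = -[Z11,Z12] = [Z22,Z12] = -[Z1 - Z2, Z12]. *)
Definition br (a b : gen) : FA := fa_comm (fa_gen a) (fa_gen b).
Definition rel (k : 'I_6) : FA :=
  match val k with
  | 0 => br Z1 Z2
  | 1 => br Z11 Z2
  | 2 => br Z1 Z22
  | 3 => fa_add (br Z11 Z22) (br Z11 Z12)
  | 4 => fa_sub (br Z11 Z22) (br Z22 Z12)
  | _ => fa_sub (fa_add (br Z11 Z22) (br Z1 Z12)) (br Z2 Z12)
  end.

(* Two-sided ideal generated by the relations.  U(X) is the quotient of the
   free associative algebra by this ideal (enveloping algebra of a Lie algebra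
   given by generators and relations). *)
Definition in_ideal (f : FA) : Prop :=
  exists (n : nat) (c : 'I_n -> C) (u v : 'I_n -> word) (k : 'I_n -> 'I_6),
    forall w, f w = \sum_(j < n)
      c j * fa_mul (fa_mul (fa_mono (u j)) (rel (k j))) (fa_mono (v j)) w.

Definition is_ad (g : gen) : bool :=
  match g with Z1 | Z2 => true | _ => false end.
Definition act (g : gen) (F : FA) : FA :=
  if is_ad g then fa_comm (fa_gen g) F else fa_mul (fa_gen g) F.

Definition alpha (W : word) (F : FA) : FA := foldr act F W.

Definition W0 (P : pred gen) (W : word) : bool :=
  all P W && (if W is x :: W' then ~~ is_ad (last x W') else true).

Definition gens_X1_12 : pred gen := fun g => g \in [:: Z1; Z11; Z12].
Definition gens_X2_12 : pred gen := fun g => g \in [:: Z2; Z22].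
Definition gens_X2_21 : pred gen := fun g => g \in [:: Z2; Z22; Z12].
Definition gens_X1_21 : pred gen := fun g => g \in [:: Z1; Z11].

Definition elt (p : word * word) : FA := alpha p.1 (alpha p.2 fa_one).

Definition lin_indep_in_U (P1 P2 : pred gen) : Prop :=
  forall (n : nat) (p : 'I_n -> word * word) (c : 'I_n -> C),
    injective p ->
    (forall j, W0 P1 (p j).1 && W0 P2 (p j).2) ->
    in_ideal (fun w => \sum_(j < n) c j * elt (p j) w) ->
    forall j, c j = 0.

(* Main.v *)
Require Import Defs.
From HB Require Import structures.
From mathcomp Require Import all_boot all_algebra.
From mathcomp Require Import complex Rstruct.
From mathcomp Require Import ring lra zify.
From Stdlib Require Import FunctionalExtensionality.
Set Implicit Arguments. Unset Strict Implicit. Unset Printing Implicit Defensive.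
Import GRing.Theory.
Local Open Scope ring_scope.
Definition gens_list : seq gen := [:: Z1; Z11; Z2; Z22; Z12].
Lemma mem_gens g : g \in gens_list. Proof. by case: g. Qed.
Lemma uniq_gens : uniq gens_list. Proof. by []. Qed.

Fixpoint words (n : nat) : seq word :=
  if n is m.+1 then [seq g :: w | g <- gens_list, w <- words m] else [:: [::]].

Lemma wordsS n : words n.+1 = [seq g :: w | g <- gens_list, w <- words n].
Proof. by []. Qed.

Lemma mem_words n w : (w \in words n) = (size w == n).
Proof.
elim: n w => [|n IH] w; first by case: w.
rewrite wordsS; apply/allpairsP/idP.
  by case=> [[g w']] /= [_]; rewrite IH => /eqP <- ->.
case: w => [|x w] //= hw; exists (x, w) => /=; split => //; first exact: mem_gens.
by rewrite IH.
Qed.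

Lemma uniq_words n : uniq (words n).
Proof.
elim: n => [|n IH] //.
rewrite wordsS; apply: allpairs_uniq => //.
by move=> [a b] [c d] _ _ /= [-> ->].
Qed.

Lemma sum_words_split (h : word -> C) n k : (k <= n)%N ->
  \sum_(w <- words n) h w =
  \sum_(x <- words (n - k)) \sum_(y <- words k) h (x ++ y).
Proof.
move=> hk.
rewrite -(big_allpairs_dep (h := fun x y => x ++ y) (r2 := fun _ => words k)).
apply: perm_big; apply: uniq_perm.
- exact: uniq_words.
- apply: allpairs_uniq; [exact: uniq_words|exact: uniq_words|].
  move=> [a b] [c d] /allpairsP [[a' b'] /= [ha hb [-> ->]]].
  move=> /allpairsP [[c' d'] /= [hc hd [-> ->]]] /= E.
  move: ha hc; rewrite !mem_words => /eqP ha /eqP hc.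
  have : take (n - k) (a' ++ b') = take (n - k) (c' ++ d') by rewrite E.
  rewrite !take_size_cat // => ->.
  have : drop (n - k) (a' ++ b') = drop (n - k) (c' ++ d') by rewrite E.
  by rewrite !drop_size_cat // => ->.
- move=> w; rewrite mem_words; apply/idP/allpairsP.
  move=> /eqP hw; exists (take (n - k) w, drop (n - k) w) => /=.
  rewrite !mem_words size_drop cat_take_drop hw size_takel; last by rewrite hw leq_subr.
  by split => //; apply/eqP; lia.
  by case=> [[x y]] /= [hx hy ->]; rewrite size_cat; move: hx hy; rewrite !mem_words => /eqP -> /eqP ->; apply/eqP; lia.
Qed.

Lemma sum_seq_delta (I : eqType) (s : seq I) (a : I) (h : I -> C) :
  uniq s -> a \in s -> \sum_(x <- s) (if x == a then h x else 0) = h a.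
Proof.
move=> us ha.
rewrite (bigD1_seq a) // eqxx big1; first exact: addr0.
by move=> i /negbTE ->.
Qed.

Lemma sum_seq_delta0 (I : eqType) (s : seq I) (a : I) (h : I -> C) :
  a \notin s -> \sum_(x <- s) (if x == a then h x else 0) = 0.
Proof.
move=> ha; rewrite big_seq big1 // => i hi.
case: eqP => // E; by move: hi; rewrite E (negbTE ha).
Qed.

Lemma size_take_le (w : word) i : (i <= size w)%N -> size (take i w) = i.
Proof. by move=> h; rewrite size_takel. Qed.

Lemma fa_mulmL u F w : fa_mul (fa_mono u) F w =
  if take (size u) w == u then F (drop (size u) w) else 0.
Proof.
rewrite /fa_mul /fa_mono.
case: (leqP (size u) (size w)) => h.
  have h' : (size u < (size w).+1)%N by [].
  rewrite (bigD1 (Ordinal h')) // big1.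
    by rewrite Monoid.mulm1; case: (take _ w == u); rewrite ?mul1r ?mul0r.
  move=> i /eqP hi; case: eqP; last by rewrite mul0r.
  move=> E; exfalso; apply: hi; apply: val_inj => /=.
  have := congr1 size E; rewrite size_take_le //; last by rewrite -ltnS.
rewrite big1; last first.
  move=> i _; case: eqP; last by rewrite mul0r.
  move=> E; have := congr1 size E; rewrite size_take_le; last by rewrite -ltnS.
  move=> hi; have := ltn_ord i; rewrite hi ltnS => h2; exfalso.
  by move: (leq_ltn_trans h2 h); rewrite ltnn.
rewrite take_oversize ?(ltnW h) //; case: eqP => // E.
by move: h; rewrite E ltnn.
Qed.

Lemma fa_mulmR F v w : fa_mul F (fa_mono v) w =
  if drop (size w - size v) w == v then F (take (size w - size v) w) else 0.
Proof.
rewrite /fa_mul /fa_mono.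
case: (leqP (size v) (size w)) => h.
  have h' : (size w - size v < (size w).+1)%N by lia.
  rewrite (bigD1 (Ordinal h')) // big1.
    by rewrite Monoid.mulm1; case: (drop _ w == v); rewrite ?mulr1 ?mulr0.
  move=> [k hk] /eqP hi; case: eqP; last by rewrite mulr0.
  move=> E; exfalso; apply: hi; apply: val_inj => /=.
  have := congr1 size E; rewrite size_drop /= => hs; lia.
rewrite big1; last first.
  move=> [k hk] _; case: eqP; last by rewrite mulr0.
  move=> E; have := congr1 size E; rewrite size_drop /=.
  move=> hi; exfalso; lia.
have -> : (size w - size v = 0)%N by lia.
rewrite drop0; case: eqP => // E.
by move: h; rewrite E ltnn.
Qed.

Definition V := word -> word -> C.
Definition zeroV : V := fun _ _ => 0.
Lemma Vext (F G : V) : (forall u v, F u v = G u v) -> F = G.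
Proof.
move=> H; apply: functional_extensionality => u; apply: functional_extensionality => v.
exact: H.
Qed.
Definition lin (T : V -> V) := forall (I : Type) (s : seq I) (c : I -> C) (F : I -> V),
  T (fun u v => \sum_(x <- s) c x * F x u v) = fun u v => \sum_(x <- s) c x * T (F x) u v.

Lemma lin_zero T : lin T -> T zeroV = zeroV.
Proof.
move=> H.
transitivity (T (fun u v => \sum_(x <- [::] : seq unit) (fun _ => 0) x * (fun _ => zeroV) x u v)).
  by congr T; apply: Vext => u v; rewrite big_nil.
by rewrite H; apply: Vext => u v; rewrite big_nil.
Qed.

Lemma lin_sub T F1 F2 : lin T ->
  T (fun u v => F1 u v - F2 u v) = fun u v => T F1 u v - T F2 u v.
Proof.
move=> H.
transitivity (T (fun u v => \sum_(x <- [:: true; false]) (fun b : bool => if b then 1 else -1) x * (fun b => if b then F1 else F2) x u v)).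
  by congr T; apply: Vext => u v; rewrite !big_cons big_nil /=; ring.
by rewrite H; apply: Vext => u v; rewrite !big_cons big_nil /=; ring.
Qed.

Lemma lin_add T F1 F2 : lin T ->
  T (fun u v => F1 u v + F2 u v) = fun u v => T F1 u v + T F2 u v.
Proof.
move=> H.
transitivity (T (fun u v => \sum_(x <- [:: true; false]) (fun b : bool => 1) x * (fun b => if b then F1 else F2) x u v)).
  by congr T; apply: Vext => u v; rewrite !big_cons big_nil /=; ring.
by rewrite H; apply: Vext => u v; rewrite !big_cons big_nil /=; ring.
Qed.

Definition rhow (rho : gen -> V -> V) (w : word) (G : V) : V := foldr rho G w.

Lemma lin_rhow rho w : (forall g, lin (rho g)) -> lin (rhow rho w).
Proof.
move=> H; elim: w => [|g w IH] I s c F //=.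
by rewrite IH H.
Qed.

Definition Phi (rho : gen -> V -> V) n (f : FA) (G : V) : V :=
  fun u v => \sum_(w <- words n) f w * rhow rho w G u v.

Lemma Phi_sum rho n m (c : 'I_m -> C) (f : 'I_m -> FA) G :
  Phi rho n (fun w => \sum_(j < m) c j * f j w) G =
  fun u v => \sum_(j < m) c j * Phi rho n (f j) G u v.
Proof.
apply: Vext => u v.
rewrite /Phi; under eq_bigr do rewrite big_distrl /=.
rewrite exchange_big; apply: eq_bigr => j _; rewrite big_distrr; apply: eq_bigr => w _.
by symmetry; exact: mulrA.
Qed.

Lemma Phi_sub rho n f g G :
  Phi rho n (fa_sub f g) G = fun u v => Phi rho n f G u v - Phi rho n g G u v.
Proof.
apply: Vext => u v.
rewrite /Phi /fa_sub -sumrB; apply: eq_bigr => w _; ring.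
Qed.

Lemma Phi_add rho n f g G :
  Phi rho n (fa_add f g) G = fun u v => Phi rho n f G u v + Phi rho n g G u v.
Proof.
apply: Vext => u v.
rewrite /Phi /fa_add -big_split; apply: eq_bigr => w _ /=; ring.
Qed.

Lemma Phi_mono rho n m G :
  Phi rho n (fa_mono m) G = if size m == n then rhow rho m G else zeroV.
Proof.
apply: Vext => u v.
rewrite /Phi /fa_mono.
under eq_bigr do rewrite (fun_if (fun x => x * _)) mul1r mul0r.
case: ifP => h.
  by rewrite sum_seq_delta // ?uniq_words // mem_words.
by rewrite sum_seq_delta0 // mem_words h.
Qed.

Lemma PhiL rho n a F G : (forall g, lin (rho g)) ->
  Phi rho n (fa_mul (fa_mono a) F) G =
  if (size a <= n)%N then rhow rho a (Phi rho (n - size a) F G) else zeroV.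
Proof.
move=> Hl; apply: Vext => u v; rewrite /Phi.
under eq_bigr do rewrite fa_mulmL.
case: ifP => h; last first.
  rewrite big_seq big1 // => w; rewrite mem_words => /eqP hw.
  rewrite take_oversize; last by rewrite hw ltnW // ltnNge h.
  case: eqP => [E|]; last by rewrite mul0r.
  by move: h; rewrite -hw E leqnn.
rewrite (@sum_words_split _ n (n - size a)) ?leq_subr // subKn //.
rewrite (lin_rhow a Hl); rewrite big_seq.
transitivity (\sum_(x <- words (size a) | x \in words (size a))
   (if x == a then \sum_(y <- words (n - size a)) F y * rhow rho a (rhow rho y G) u v else 0)).
  apply: eq_bigr => x; rewrite mem_words => /eqP hx.
  case: eqP => [->|ne].
    apply: eq_bigr => y _; rewrite take_size_cat // eqxx drop_size_cat //.
    by rewrite /rhow foldr_cat.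
  rewrite big1 // => y _; rewrite take_size_cat //; case: eqP => // _; by rewrite mul0r.
rewrite -big_seq sum_seq_delta ?uniq_words ?mem_words //.
Qed.

Lemma PhiR rho n b F G :
  Phi rho n (fa_mul F (fa_mono b)) G =
  if (size b <= n)%N then Phi rho (n - size b) F (rhow rho b G) else zeroV.
Proof.
apply: Vext => u v; rewrite /Phi.
under eq_bigr do rewrite fa_mulmR.
case: ifP => h; last first.
  rewrite big_seq big1 // => w; rewrite mem_words => /eqP hw.
  have -> : (size w - size b = 0)%N by rewrite hw; apply/eqP; rewrite subn_eq0 ltnW // ltnNge h.
  rewrite drop0; case: eqP => [E|]; last by rewrite mul0r.
  by move: h; rewrite -hw E leqnn.
rewrite (@sum_words_split _ n (size b)) //; cbv beta.
apply: eq_big_seq => x; rewrite mem_words => /eqP hx.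
rewrite big_seq.
transitivity (\sum_(y <- words (size b) | y \in words (size b))
   (if y == b then F x * rhow rho x (rhow rho b G) u v else 0)).
  apply: eq_bigr => y; rewrite mem_words => /eqP hy.
  have E1 : (size (x ++ y) - size b = size x)%N by rewrite size_cat hy; lia.
  rewrite E1 drop_size_cat // take_size_cat //.
  case: eqP => [->|]; last by rewrite mul0r.
  by rewrite /rhow foldr_cat.
by rewrite -big_seq sum_seq_delta ?uniq_words ?mem_words.
Qed.

Fixpoint OpA (rho : gen -> V -> V) (W : word) (K : V -> V) (G : V) : V :=
  match W with
  | [::] => K G
  | x :: W' => if is_ad x then
                 (fun u v => rho x (OpA rho W' K G) u v - OpA rho W' K (rho x G) u v)
               else rho x (OpA rho W' K G)
  end.

Lemma OpA_zeroK rho W G : (forall g, lin (rho g)) ->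
  OpA rho W (fun _ => zeroV) G = zeroV.
Proof.
move=> Hl; elim: W G => [|x W IH] G //=.
case: (is_ad x); rewrite !IH lin_zero //.
by apply: Vext => u v; rewrite /zeroV subrr.
Qed.

Lemma Phi_act rho n g F G : (forall g, lin (rho g)) ->
  Phi rho n (act g F) G =
  if (1 <= n)%N then
    (if is_ad g then fun u v => rho g (Phi rho (n-1) F G) u v - Phi rho (n-1) F (rho g G) u v
     else rho g (Phi rho (n-1) F G))
  else zeroV.
Proof.
move=> Hl; rewrite /act; case: (is_ad g).
  rewrite /fa_comm Phi_sub /fa_gen PhiL // PhiR /=.
  case: ifP => _ //; by apply: Vext => u v; rewrite /zeroV subrr.
by rewrite /fa_gen PhiL.
Qed.

Lemma Phi_alpha rho n W F G : (forall g, lin (rho g)) ->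
  Phi rho n (alpha W F) G =
  if (size W <= n)%N then OpA rho W (Phi rho (n - size W) F) G else zeroV.
Proof.
move=> Hl; elim: W n G => [|x W IH] n G.
  by rewrite /= subn0.
rewrite /= Phi_act //.
case: n => [|n] //=.
rewrite subn1 /= !IH ltnS subSS.
case: (size W <= n)%N; case: (is_ad x) => //; rewrite lin_zero //.
by apply: Vext => u v; rewrite /zeroV subrr.
Qed.

Lemma Phi_one rho n G : Phi rho n fa_one G = if n == 0%N then G else zeroV.
Proof. by rewrite /fa_one Phi_mono eq_sym. Qed.

Lemma Phi_elt rho n p G : (forall g, lin (rho g)) ->
  Phi rho n (elt p) G =
  if (size p.1 + size p.2 == n)%N then OpA rho p.1 (OpA rho p.2 (fun H => H)) G else zeroV.
Proof.
move=> Hl; rewrite /elt Phi_alpha //.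
case h1: (size p.1 <= n)%N; last first.
  case: eqP => // E; by move: h1; rewrite -E leq_addr.
have -> : Phi rho (n - size p.1) (alpha p.2 fa_one) =
  fun H => if (size p.2 <= n - size p.1)%N then
    OpA rho p.2 (Phi rho (n - size p.1 - size p.2) fa_one) H else zeroV.
  by apply: functional_extensionality => H; rewrite Phi_alpha.
case h2: (size p.2 <= n - size p.1)%N; last first.
  rewrite OpA_zeroK //; case: eqP => // E; by move: h2; rewrite -E addKn leqnn.
have -> : Phi rho (n - size p.1 - size p.2) fa_one =
  fun H => if (n - size p.1 - size p.2 == 0)%N then H else zeroV.
  by apply: functional_extensionality => H; rewrite Phi_one.
case: (n - size p.1 - size p.2 =P 0)%N => E.
  have -> : (size p.1 + size p.2 == n)%N by apply/eqP; lia.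
  by [].
have -> : (size p.1 + size p.2 == n)%N = false by apply/eqP; lia.
have -> : (fun H => OpA rho p.2 (fun=> zeroV) H) = fun _ => zeroV.
  by apply: functional_extensionality => H; rewrite OpA_zeroK.
by rewrite OpA_zeroK.
Qed.

Lemma Phi_ideal rho n u r v G : (forall g, lin (rho g)) ->
  (forall m H, Phi rho m r H = zeroV) ->
  Phi rho n (fa_mul (fa_mul (fa_mono u) r) (fa_mono v)) G = zeroV.
Proof.
move=> Hl Hr; rewrite PhiR; case: ifP => // _.
rewrite PhiL //; case: ifP => // _.
by rewrite Hr lin_zero //; exact: lin_rhow.
Qed.

Record cfg := Cfg { isA : gen -> bool; dco : gen -> gen -> gen -> gen -> C }.

Definition L1 (a : gen) (F : V) : V := fun u v =>
  match u with x :: u' => if x == a then F u' v else 0 | [::] => 0 end.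
Definition L2 (b : gen) (F : V) : V := fun u v =>
  match v with x :: v' => if x == b then F u v' else 0 | [::] => 0 end.
Definition Mq (q : gen -> gen -> C) (F : V) : V := fun u v =>
  match u with c :: c2 :: u'' => q c c2 * F u'' v | _ => 0 end.

Fixpoint Dfix (d : gen -> gen -> gen -> C) (u : word) (F : word -> C) : C :=
  match u with
  | [::] => 0
  | c :: u' => Dfix d u' (fun w => F (c :: w)) +
      match u' with
      | c2 :: u'' => \sum_(a <- gens_list) d a c c2 * F (a :: u'')
      | [::] => 0
      end
  end.

Lemma Dfix_nil d F : Dfix d [::] F = 0. Proof. by []. Qed.
Lemma Dfix_1 d c F : Dfix d [:: c] F = Dfix d [::] (fun w => F (c :: w)) + 0.
Proof. by []. Qed.
Lemma Dfix_2 d c c2 u F : Dfix d [:: c, c2 & u] F =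
  Dfix d (c2 :: u) (fun w => F (c :: w)) + \sum_(a <- gens_list) d a c c2 * F (a :: u).
Proof. by []. Qed.
Arguments Dfix : simpl never.

Definition Der (cf : cfg) (b : gen) (F : V) : V := fun u v => Dfix (dco cf b) u (fun w => F w v).
Definition rho (cf : cfg) (g : gen) (F : V) : V :=
  if isA cf g then L1 g F else fun u v => Der cf g F u v + L2 g F u v.

Lemma lin_L1 a : lin (L1 a).
Proof.
move=> I s c F; apply: Vext => [[|x u]] v /=.
  by rewrite big1 // => i _; rewrite mulr0.
case: (x == a) => //; by rewrite big1 // => i _; rewrite mulr0.
Qed.

Lemma lin_L2 b : lin (L2 b).
Proof.
move=> I s c F; apply: Vext => u [|x v] /=.
  by rewrite big1 // => i _; rewrite mulr0.
case: (x == b) => //; by rewrite big1 // => i _; rewrite mulr0.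
Qed.

Lemma Dfix_lin d u (I : Type) (s : seq I) (c : I -> C) (F : I -> word -> C) :
  Dfix d u (fun w => \sum_(x <- s) c x * F x w) = \sum_(x <- s) c x * Dfix d u (F x).
Proof.
elim: u F => [|c0 u IH] F.
  by rewrite big1 // => i _; rewrite Dfix_nil mulr0.
case: u IH => [|c2 u] IH.
  rewrite Dfix_1 addr0 (IH (fun x w => F x (c0 :: w))).
  by apply: eq_bigr => x _; rewrite Dfix_1 addr0.
rewrite Dfix_2 (IH (fun x w => F x (c0 :: w))).
under [RHS]eq_bigr do rewrite Dfix_2 mulrDr.
rewrite big_split; congr (_ + _).
under eq_bigr do rewrite big_distrr.
rewrite [RHS]exchange_big; apply: eq_bigr => a _; rewrite big_distrr.
apply: eq_bigr => x _; rewrite /=; ring.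
Qed.

Lemma lin_Der cf b : lin (Der cf b).
Proof. by move=> I s c F; apply: Vext => u v; rewrite /Der Dfix_lin. Qed.

Lemma lin_rho cf g : lin (rho cf g).
Proof.
rewrite /rho; case: (isA cf g); first exact: lin_L1.
move=> I s c F; apply: Vext => u v.
rewrite (lin_Der cf g s c F) (lin_L2 g s c F) -big_split; apply: eq_bigr => x _.
by rewrite mulrDr.
Qed.

Lemma Dfix0F d u F : (forall x w, F (x :: w) = 0) -> Dfix d u F = 0.
Proof.
elim: u F => [|c u IH] F hF; first by [].
case: u IH => [|c2 u] IH.
  by rewrite Dfix_1 Dfix_nil addr0.
rewrite Dfix_2 IH // big1 ?addr0 // => a _; by rewrite hF mulr0.
Qed.

Lemma Dfix0 d u : Dfix d u (fun _ => 0) = 0.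
Proof. exact: Dfix0F. Qed.

Lemma sum_gens_delta (a : gen) (h : gen -> C) :
  \sum_(x <- gens_list) (if x == a then h x else 0) = h a.
Proof. by rewrite sum_seq_delta // ?mem_gens. Qed.

Lemma Der_L1 cf b a G :
  Der cf b (L1 a G) = fun u v => L1 a (Der cf b G) u v + Mq (dco cf b a) G u v.
Proof.
apply: Vext => u v; rewrite /Der /L1 /Mq.
case: u => [|c u]; first by rewrite Dfix_nil addr0.
case: u => [|c2 u].
  by case: (c == a); rewrite Dfix_1 !Dfix_nil !addr0.
rewrite Dfix_2; congr (_ + _).
  by case E: (c == a) => /=; rewrite ?Dfix0.
rewrite (eq_bigr (fun x => if x == a then dco cf b x c c2 * G u v else 0)).
  by rewrite sum_gens_delta.
by move=> x _ /=; case: (x == a); rewrite ?mulr0.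
Qed.

Lemma L1_L2 a b G : L1 a (L2 b G) = L2 b (L1 a G).
Proof.
apply: Vext => -[|x u] [|y v] //=; try case: (x == a); try case: (y == b); done.
Qed.

Lemma comm_AB cf a b G : isA cf a -> ~~ isA cf b ->
  (fun u v => rho cf a (rho cf b G) u v - rho cf b (rho cf a G) u v) =
  fun u v => - Mq (dco cf b a) G u v.
Proof.
move=> ha hb; rewrite /rho ha (negbTE hb) (lin_add _ _ (lin_L1 a)) Der_L1 L1_L2.
apply: Vext => u v; ring.
Qed.

Definition brc (x y : gen) (c c2 : gen) : C :=
  (if (c == x) && (c2 == y) then 1 else 0) - (if (c == y) && (c2 == x) then 1 else 0).

Lemma comm_AA cf a b G : isA cf a -> isA cf b ->
  (fun u v => rho cf a (rho cf b G) u v - rho cf b (rho cf a G) u v) =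
  Mq (brc a b) G.
Proof.
move=> ha hb; rewrite /rho ha hb; apply: Vext => [[|c [|c2 u]]] v; rewrite /L1 /Mq /brc.
- by rewrite subrr.
- by case: (c == a); case: (c == b); rewrite subrr.
case: (c == a); case: (c2 == b); case: (c == b); case: (c2 == a); rewrite /=; ring.
Qed.

Lemma comm_BA cf a b G : isA cf a -> ~~ isA cf b ->
  (fun u v => rho cf b (rho cf a G) u v - rho cf a (rho cf b G) u v) =
  Mq (dco cf b a) G.
Proof.
move=> ha hb; have := comm_AB G ha hb => E.
apply: Vext => u v.
have := congr1 (fun F : V => F u v) E => /= E'.
by rewrite -opprB E' opprK.
Qed.

Lemma Phi_br rho m a b G : (forall g, lin (rho g)) ->
  Phi rho m (br a b) G =
  if m == 2%N then (fun u v => rho a (rho b G) u v - rho b (rho a G) u v) else zeroV.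
Proof.
move=> Hl; rewrite /br /fa_comm Phi_sub /fa_gen !PhiL // !Phi_mono.
case: m => [|[|[|m]]] //=; rewrite ?lin_zero //; apply: Vext => u v; by rewrite /zeroV subrr.
Qed.

Definition dco1 (b a : gen) : gen -> gen -> C :=
  match b, a with
  | Z2, Z12 => fun c c2 => brc Z1 Z12 c c2 - brc Z11 Z12 c c2
  | Z22, Z11 => brc Z11 Z12
  | Z22, Z12 => fun c c2 => - brc Z11 Z12 c c2
  | _, _ => fun _ _ => 0
  end.
Definition isA1 (g : gen) : bool := match g with Z1 | Z11 | Z12 => true | _ => false end.
Definition cf1 := Cfg isA1 dco1.

Definition dco2 (b a : gen) : gen -> gen -> C :=
  match b, a with
  | Z1, Z12 => fun c c2 => brc Z2 Z12 c c2 - brc Z22 Z12 c c2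
  | Z11, Z22 => brc Z22 Z12
  | Z11, Z12 => fun c c2 => - brc Z22 Z12 c c2
  | _, _ => fun _ _ => 0
  end.
Definition isA2 (g : gen) : bool := match g with Z2 | Z22 | Z12 => true | _ => false end.
Definition cf2 := Cfg isA2 dco2.

Lemma commAB cf a b G u v : isA cf a -> ~~ isA cf b ->
  rho cf a (rho cf b G) u v - rho cf b (rho cf a G) u v = - Mq (dco cf b a) G u v.
Proof. by move=> ha hb; have := congr1 (fun F : V => F u v) (comm_AB G ha hb). Qed.
Lemma commBA cf a b G u v : isA cf a -> ~~ isA cf b ->
  rho cf b (rho cf a G) u v - rho cf a (rho cf b G) u v = Mq (dco cf b a) G u v.
Proof. by move=> ha hb; have := congr1 (fun F : V => F u v) (comm_BA G ha hb). Qed.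
Lemma commAA cf a b G u v : isA cf a -> isA cf b ->
  rho cf a (rho cf b G) u v - rho cf b (rho cf a G) u v = Mq (brc a b) G u v.
Proof. by move=> ha hb; have := congr1 (fun F : V => F u v) (comm_AA G ha hb). Qed.

Ltac relfin Hl :=
  rewrite ?(Phi_br _ _ _ _ Hl);
  (case: (_ == 2%N); last by apply: Vext => u v; rewrite /zeroV; ring);
  apply: Vext => -[|c [|c2 u]] v.

Lemma rel1 k m G : Phi (rho cf1) m (Defs.rel k) G = zeroV.
Proof.
have Hl := lin_rho cf1.
case: k => [[|[|[|[|[|[|k]]]]]] hk] //; rewrite /Defs.rel /=;
  [ | | | rewrite Phi_add | rewrite Phi_sub | rewrite Phi_sub Phi_add]; relfin Hl;
  rewrite ?(@commAB cf1 Z1 Z2) ?(@commAB cf1 Z11 Z2) ?(@commAB cf1 Z1 Z22)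
          ?(@commAB cf1 Z11 Z22) ?(@commAA cf1 Z11 Z12) ?(@commBA cf1 Z12 Z22)
          ?(@commAA cf1 Z1 Z12) ?(@commBA cf1 Z12 Z2) //;
  rewrite /Mq /zeroV /=; try ring.
Qed.

Lemma rel2 k m G : Phi (rho cf2) m (Defs.rel k) G = zeroV.
Proof.
have Hl := lin_rho cf2.
case: k => [[|[|[|[|[|[|k]]]]]] hk] //; rewrite /Defs.rel /=;
  [ | | | rewrite Phi_add | rewrite Phi_sub | rewrite Phi_sub Phi_add]; relfin Hl;
  rewrite ?(@commBA cf2 Z2 Z1) ?(@commBA cf2 Z2 Z11) ?(@commBA cf2 Z22 Z1)
          ?(@commBA cf2 Z22 Z11) ?(@commBA cf2 Z12 Z11) ?(@commAA cf2 Z22 Z12)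
          ?(@commBA cf2 Z12 Z1) ?(@commAA cf2 Z2 Z12) //;
  rewrite /Mq /zeroV /=; try ring.
Qed.

Definition Lf (a : gen) (f : FA) : FA := fun w =>
  match w with x :: w' => if x == a then f w' else 0 | [::] => 0 end.
Fixpoint OpF (W : word) (f : FA) : FA :=
  match W with
  | [::] => f
  | x :: W' => if is_ad x then (fun w => Lf x (OpF W' f) w - OpF W' (Lf x f) w)
               else Lf x (OpF W' f)
  end.
Definition tensor (f g : FA) : V := fun u v => f u * g v.
Definition delta : FA := fa_mono [::].
Definition e0 : V := tensor delta delta.

Lemma rhoA_tensor cf a f g : isA cf a -> rho cf a (tensor f g) = tensor (Lf a f) g.
Proof.
move=> ha; rewrite /rho ha; apply: Vext => -[|x u] v; rewrite /L1 /tensor /Lf.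
  by rewrite mul0r.
by case: (x == a); rewrite ?mul0r.
Qed.

Lemma rhoB_tensor cf b g : ~~ isA cf b -> rho cf b (tensor delta g) = tensor delta (Lf b g).
Proof.
move=> hb; rewrite /rho (negbTE hb); apply: Vext => u v; rewrite /Der /L2 /tensor /Lf.
rewrite Dfix0F; last first.
  by move=> x w; rewrite /delta /fa_mono /= mul0r.
rewrite add0r; case: v => [|y v]; first by rewrite mulr0.
by case: (y == b); rewrite ?mulr0.
Qed.

Lemma OpA_tensorA cf W f g : all (isA cf) W ->
  OpA (rho cf) W (fun H => H) (tensor f g) = tensor (OpF W f) g.
Proof.
elim: W f => [|x W IH] f //= /andP [hx hW].
rewrite IH //; case: (is_ad x); rewrite !rhoA_tensor // ?IH //.
apply: Vext => u v; rewrite /tensor; ring.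
Qed.

Lemma OpA_tensorB cf W g : all (predC (isA cf)) W ->
  OpA (rho cf) W (fun H => H) (tensor delta g) = tensor delta (OpF W g).
Proof.
elim: W g => [|x W IH] g //= /andP [hx hW].
rewrite IH //; case: (is_ad x); rewrite !rhoB_tensor // ?IH //.
apply: Vext => u v; rewrite /tensor; ring.
Qed.

Lemma OpA_commute cf a W K :
  (forall G, rho cf a (K G) = K (rho cf a G)) ->
  (forall x, x \in W -> forall G, rho cf a (rho cf x G) = rho cf x (rho cf a G)) ->
  forall G, rho cf a (OpA (rho cf) W K G) = OpA (rho cf) W K (rho cf a G).
Proof.
move=> hK; elim: W => [|x W IH] hW G //=.
have IH' := IH (fun y (hy : y \in W) => hW y (introT orP (or_intror hy))).
have hx := hW x (mem_head x W).
case: (is_ad x).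
  rewrite lin_sub; last exact: lin_rho.
  apply: Vext => u v.
  by rewrite hx (IH' G) (IH' (rho cf x G)) hx.
by rewrite hx IH'.
Qed.

Lemma OpA_shift cf W K :
  (forall x, x \in W -> is_ad x -> forall G, rho cf x (K G) = K (rho cf x G)) ->
  forall G, OpA (rho cf) W K G = OpA (rho cf) W (fun H => H) (K G).
Proof.
elim: W => [|x W IH] hW G //=.
have IH' := IH (fun y (hy : y \in W) => hW y (introT orP (or_intror hy))).
case hx: (is_ad x).
  by rewrite !IH' (hW x (mem_head x W) hx).
by rewrite IH'.
Qed.

Lemma rho_comm cf a b G : isA cf a -> ~~ isA cf b ->
  (forall c c2, dco cf b a c c2 = 0) -> rho cf a (rho cf b G) = rho cf b (rho cf a G).
Proof.
move=> ha hb hd; apply: Vext => u v.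
apply/eqP; rewrite -subr_eq0; apply/eqP.
rewrite commAB // /Mq; case: u => [|c [|c2 u]]; rewrite ?oppr0 //.
by rewrite hd mul0r oppr0.
Qed.

Definition cfok (cf : cfg) := forall a b, isA cf a -> is_ad a -> ~~ isA cf b ->
  forall c c2, dco cf b a c c2 = 0.

Lemma E_formula cf p : cfok cf -> all (isA cf) p.1 -> all (predC (isA cf)) p.2 ->
  OpA (rho cf) p.1 (OpA (rho cf) p.2 (fun H => H)) e0 =
  tensor (OpF p.1 delta) (OpF p.2 delta).
Proof.
move=> hcf h1 h2.
rewrite OpA_shift; last first.
  move=> x hx hxad G; apply: OpA_commute => // y hy H.
  apply: rho_comm.
  - by move/allP: h1; apply.
  - by move/allP: h2 => /(_ y hy).
  apply: hcf => //; first by move/allP: h1; apply.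
  by move/allP: h2 => /(_ y hy).
by rewrite OpA_tensorB // OpA_tensorA.
Qed.

Fixpoint pot (w : word) : nat :=
  match w with [::] => 0%N | x :: w' => (pot w' + count is_ad w')%N end.

Lemma pot_cat s t : pot (s ++ t) = (pot s + pot t + size s * count is_ad t)%N.
Proof.
elim: s => [|x s IH] /=; first by rewrite mul0n addn0.
rewrite IH count_cat; lia.
Qed.

Definition Tri (W0 : word) (T : FA) :=
  T W0 = 1 /\ forall w, T w != 0 ->
    w = W0 \/ (count is_ad w = count is_ad W0 /\ (pot W0 < pot w)%N).

Lemma Tri_mono g0 : Tri g0 (fa_mono g0).
Proof.
split; first by rewrite /fa_mono eqxx.
move=> w; rewrite /fa_mono; case: (w =P g0) => [-> _|_]; first by left.
by rewrite eqxx.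
Qed.

Lemma Lf_mono x g0 : Lf x (fa_mono g0) = fa_mono (x :: g0).
Proof.
apply: functional_extensionality => -[|y w] //=.
rewrite /fa_mono eqseq_cons; by case: (y == x).
Qed.

Lemma Tri_Lf x W0 T : Tri W0 T -> Tri (x :: W0) (Lf x T).
Proof.
move=> [h1 h2]; split; first by rewrite /Lf eqxx.
move=> [|y w]; rewrite /Lf; first by rewrite eqxx.
case: (y =P x) => [->|_]; last by rewrite eqxx.
move=> /h2 [->|[hc hp]]; first by left.
right; rewrite /= hc; split => //; lia.
Qed.

Lemma Tri_sub A B T1 T2 : Tri A T1 -> Tri B T2 ->
  count is_ad A = count is_ad B -> (pot A < pot B)%N ->
  Tri A (fun w => T1 w - T2 w).
Proof.
move=> [a1 a2] [b1 b2] hc hp.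
have T2A : T2 A = 0.
  apply/eqP; apply: contraT => /b2 [E|[_ h]]; first by move: hp; rewrite E ltnn.
  by move: (ltn_trans hp h); rewrite ltnn.
split; first by rewrite a1 T2A subr0.
move=> w hw.
case: (eqVneq (T1 w) 0) => h1.
  have : T2 w != 0 by move: hw; rewrite h1 sub0r oppr_eq0.
  move=> /b2 [->|[hc' hp']]; first by right; split.
  right; split; first by rewrite hc' hc.
  exact: ltn_trans hp hp'.
exact: a2.
Qed.

Definition nonadlast (W : word) : bool :=
  if W is x :: W' then ~~ is_ad (last x W') else true.

Lemma count_lt_size x W : ~~ is_ad (last x W) -> (count is_ad (x :: W) < size (x :: W))%N.
Proof.
move=> h.
have hm : last x W \in x :: W by exact: mem_last.
have := count_predC is_ad (x :: W).
have : (0 < count (predC is_ad) (x :: W))%N.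
  by rewrite -has_count; apply/hasP; exists (last x W).
lia.
Qed.

Lemma OpF_tri W g0 : nonadlast W -> Tri (W ++ g0) (OpF W (fa_mono g0)).
Proof.
elim: W g0 => [|x W IH] g0 /=; first by move=> _; exact: Tri_mono.
case: W IH => [|y W] IH hl.
  rewrite /= (negbTE hl) Lf_mono; exact: Tri_mono.
have hl' : nonadlast (y :: W) by [].
case hx: (is_ad x); last first.
  exact: Tri_Lf (IH g0 hl').
rewrite Lf_mono.
apply: Tri_sub (Tri_Lf x (IH g0 hl')) (IH (x :: g0) hl') _ _.
  by rewrite /= !count_cat /= hx; case: (is_ad y) => /=; lia.
have := count_lt_size hl.
rewrite /= pot_cat pot_cat /= !count_cat /= hx; case: (is_ad y) => /=; lia.
Qed.

Lemma indep_cfg cf : cfok cf ->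
  (forall k m G, Phi (rho cf) m (Defs.rel k) G = zeroV) ->
  forall (n : nat) (p : 'I_n -> word * word) (c : 'I_n -> C),
    injective p ->
    (forall j, [&& all (isA cf) (p j).1, nonadlast (p j).1,
                   all (predC (isA cf)) (p j).2 & nonadlast (p j).2]) ->
    in_ideal (fun w => \sum_(j < n) c j * elt (p j) w) ->
    forall j, c j = 0.
Proof.
move=> hcf hrel n p c inj hp [m [c' [u' [v' [k' Hid]]]]].
have Hl := lin_rho cf.
have HS : forall N u v, \sum_(j < n) c j * Phi (rho cf) N (elt (p j)) e0 u v = 0.
  move=> N u v.
  have := congr1 (fun F : V => F u v) (Phi_sum (rho cf) N c (fun j => elt (p j)) e0).
  move=> /= <-.
  have -> : (fun w => \sum_(j < n) c j * elt (p j) w) =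
    (fun w => \sum_(i < m) c' i * fa_mul (fa_mul (fa_mono (u' i)) (Defs.rel (k' i))) (fa_mono (v' i)) w).
    by apply: functional_extensionality => w; rewrite Hid.
  rewrite Phi_sum big1 // => i _.
  by rewrite Phi_ideal // mulr0.
have HE : forall j N u v, Phi (rho cf) N (elt (p j)) e0 u v =
    if (size (p j).1 + size (p j).2 == N)%N then OpF (p j).1 delta u * OpF (p j).2 delta v else 0.
  move=> j N u v; rewrite Phi_elt //.
  have /and4P [a1 _ a2 _] := hp j.
  by case: ifP => _ //; rewrite E_formula.
have HT : forall j, Tri (p j).1 (OpF (p j).1 delta) /\ Tri (p j).2 (OpF (p j).2 delta).
  move=> j; have /and4P [_ b1 _ b2] := hp j.
  by split; rewrite -[X in Tri X](cats0 _); apply: OpF_tri.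
pose key j := (pot (p j).1 + pot (p j).2)%N.
suff H : forall M j, (key j < M)%N -> c j = 0.
  by move=> j; apply: (H (key j).+1).
elim=> [|M IH] j hj; first by [].
case: (ltnP (key j) M) => hjM; first exact: IH.
have hkey : key j = M by lia.
have := HS (size (p j).1 + size (p j).2)%N (p j).1 (p j).2.
rewrite (bigD1 j) // big1.
  rewrite HE eqxx.
  have [[t1 _] [t2 _]] := HT j.
  by rewrite t1 t2 !mulr1 Monoid.mulm1.
move=> k hk; rewrite HE.
case: (eqVneq (c k) 0) => [->|ck]; first by rewrite mul0r.
case: ifP => _; last by rewrite mulr0.
have [[_ s1] [_ s2]] := HT k.
case: (eqVneq (OpF (p k).1 delta (p j).1) 0) => [->|n1]; first by rewrite mul0r mulr0.
case: (eqVneq (OpF (p k).2 delta (p j).2) 0) => [->|n2]; first by rewrite !mulr0.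
exfalso.
have hkM : (M <= key k)%N.
  rewrite leqNgt; apply/negP => /IH hc; by move: ck; rewrite hc eqxx.
move: (s1 _ n1) (s2 _ n2) => [e1|[_ q1]] [e2|[_ q2]].
- have : p j = p k by case: (p j) (p k) e1 e2 => [? ?] [? ?] /= -> ->.
  by move=> /inj E; move: hk; rewrite E eqxx.
- move: hkM hkey; rewrite /key e1; lia.
- move: hkM hkey; rewrite /key e2; lia.
- move: hkM hkey; rewrite /key; lia.
Qed.

Lemma cfok1 : cfok cf1.
Proof. by move=> [] [] //= _ _ _ c c2. Qed.
Lemma cfok2 : cfok cf2.
Proof. by move=> [] [] //= _ _ _ c c2. Qed.

Lemma W0_split (P : pred gen) (Q : pred gen) W :
  (forall g, P g -> Q g) -> W0 P W -> all Q W && nonadlast W.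
Proof.
move=> hPQ /andP [hall hl]; apply/andP; split; last by case: W hall hl.
by apply: sub_all hall => g /hPQ.
Qed.

Lemma s11 g : gens_X1_12 g -> isA cf1 g. Proof. by case: g. Qed.
Lemma s12 g : gens_X2_12 g -> predC (isA cf1) g. Proof. by case: g. Qed.
Lemma s21 g : gens_X2_21 g -> isA cf2 g. Proof. by case: g. Qed.
Lemma s22 g : gens_X1_21 g -> predC (isA cf2) g. Proof. by case: g. Qed.

Theorem lemma7p5 :
  lin_indep_in_U gens_X1_12 gens_X2_12 /\ lin_indep_in_U gens_X2_21 gens_X1_21.
Proof.
split.
- move=> n p c inj hp; apply: (indep_cfg cfok1 (@rel1)) => // j.
  have /andP [h1 h2] := hp j.
  have /andP [-> ->] := W0_split s11 h1.
  by have /andP [-> ->] := W0_split s12 h2.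
- move=> n p c inj hp; apply: (indep_cfg cfok2 (@rel2)) => // j.
  have /andP [h1 h2] := hp j.
  have /andP [-> ->] := W0_split s21 h1.
  by have /andP [-> ->] := W0_split s22 h2.
Qed.
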